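(* For any integers $p\geq3$, $k\geq1$, there exists $\lambda^{(2)}=\lambda^{(2)}(p,k)>0$ such that, for every $\lambda>0$ for which $m_*(\lambda)$ is defined, $m_*(\lambda)<m_\lambda$ if $\lambda<\lambda^{(2)}$ and $m_*(\lambda)\geq m_\lambda$ if $\lambda\geq\lambda^{(2)}$.
   Context: For $\lambda>0$: $m_\lambda=\min\left\{1,\left(\frac{(p-2)\sqrt p}{\lambda\sqrt{p-1}}\right)^{1/k}\right\}$, and $m_*(\lambda)$ is the largest solution $m\in(0,1]$ of $\frac{\lambda m^k}{\sqrt p}=\frac{m^2}{\sqrt{1-m^2}}$ (when such a solution exists). *)

(* Defs.v *)
From Stdlib Require Import Reals.
Open Scope R_scope.

Definition m_lam (p k : nat) (lam : R) : R :=
  Rmin 1 (Rpower ((INR p - 2) * sqrt (INR p) / (lam * sqrt (INR p - 1))) (1 / INR k)).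

(* m is a solution in (0,1] of  lam m^k / sqrt p = m^2 / sqrt(1 - m^2).
   At m = 1 the right-hand side is infinite, so solutions lie in (0,1). *)
Definition mstar_eq (p k : nat) (lam m : R) : Prop :=
  0 < m < 1 /\ lam * m ^ k / sqrt (INR p) = m ^ 2 / sqrt (1 - m ^ 2).

(* is_mstar p k lam m : m_*(lam) is defined and equals m, i.e. m is the
   largest solution of the equation above. *)
Definition is_mstar (p k : nat) (lam m : R) : Prop :=
  mstar_eq p k lam m /\ forall m', mstar_eq p k lam m' -> m' <= m.

(* Main.v *)
Require Import Defs.
From Stdlib Require Import Reals Lra Lia Ranalysis5.

Open Scope R_scope.

Lemma sq0 (u:R) : 0 <= u*u.
Proof. pose proof (Rle_0_sqr u). unfold Rsqr in H. lra. Qed.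

Lemma tangent (n:nat) (x y:R): 0<=x -> 0<=y ->
  x^(S n) + INR (S n) * x^n * (y - x) <= y^(S n).
Proof.
  intros hx hy. induction n as [|n IH].
  - simpl. lra.
  - change (x^(S (S n))) with (x * x^(S n)).
    change (y^(S (S n))) with (y * y^(S n)).
    change (x^(S n)) with (x * x^n) in *.
    change (y^(S n)) with (y * y^n) in *.
    rewrite !S_INR in *.
    assert (hX : 0 <= x^n) by (apply pow_le; lra).
    assert (hn : 0 <= INR n) by apply pos_INR.
    assert (h1 : y * (x * x ^ n + (INR n + 1) * x ^ n * (y - x)) <= y * (y * y^n))
      .
    { apply Rmult_le_compat_l. lra. lra. }
    assert (h2 : 0 <= (INR n + 1) * x^n * ((y-x)*(y-x))).
    { apply Rmult_le_pos. apply Rmult_le_pos; lra. apply sq0. }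
    nra.
Qed.

Lemma phi_max (j:nat) (x0 x:R) : 0 < x0 < 1 -> x0 <= x < 1 ->
  let n := INR (S j) in let a := n / (n+1) in let x1 := Rmax x0 a in
  x^(S j) * (1-x) <= x1^(S j) * (1 - x1).
Proof.
  intros h0 hx n a x1.
  assert (hn : 0 < n) by (unfold n; apply lt_0_INR; lia).
  assert (ha : a * (n+1) = n) by (unfold a; field; lra).
  assert (ha1 : 0 <= a < 1).
  { split. unfold a. apply Rmult_le_pos; [lra| left; apply Rinv_0_lt_compat; lra].
    apply (Rmult_lt_reg_r (n+1)); [lra|]. rewrite ha. lra. }
  assert (hX : 0 <= x^j) by (apply pow_le; lra).
  change (x^(S j)) with (x * x^j).
  unfold x1, Rmax. destruct (Rle_dec x0 a) as [hle|hlt].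
  -
    pose proof (tangent j x a ltac:(lra) ltac:(lra)) as T.
    change (x^(S j)) with (x * x^j) in T. fold n in T.
    assert (T2 : (x * x^j + n * x^j * (a - x)) * (1-a) <= a^(S j) * (1-a))
      by (apply Rmult_le_compat_r; lra).
    set (E := n - a - n*a).
    assert (hE : E = 0) by (unfold E; lra).
    assert (Hid : (x + n*(a-x))*(1-a) - x*(1-x) = (x-a)*(x-a) + (a-x)*E)
      by (unfold E; ring).
    rewrite hE in Hid.
    assert (0 <= x^j * ((x-a)*(x-a))) by (apply Rmult_le_pos; [lra|apply sq0]).
    nra.
  - assert (hax : a < x0) by lra.
    pose proof (tangent j x x0 ltac:(lra) ltac:(lra)) as T.
    change (x^(S j)) with (x * x^j) in T. fold n in T.
    assert (T2 : (x * x^j + n * x^j * (x0 - x)) * (1-x0) <= x0^(S j) * (1-x0))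
      by (apply Rmult_le_compat_r; lra).
    assert (hq : n * (1 - x0) <= x0) by nra.
    assert (0 <= x^j * ((x - x0)*(x - n*(1-x0)))) by (apply Rmult_le_pos; nra).
    nra.
Qed.

Lemma x_level (k:nat) (x0:R) : (1 <= k)%nat -> 0 < x0 < 1 ->
  exists x1, x0 <= x1 < 1 /\ forall x, x0 <= x < 1 ->
    x1*x1 * x^k * (1-x) <= x*x * x1^k * (1-x1).
Proof.
  intros hk h0.
  destruct k as [|[|[|j]]]; [lia| | |].
  - exists x0. split; [lra|]. intros x hx. simpl.
    assert (0 <= x0 * x * (x - x0)) by (apply Rmult_le_pos; [apply Rmult_le_pos|]; lra).
    nra.
  - exists x0. split; [lra|]. intros x hx. simpl.
    assert (0 <= x0*x0*x*x) by (repeat apply Rmult_le_pos; lra).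
    nra.
  - set (n := INR (S j)). set (a := n/(n+1)).
    assert (hn : 0 < n) by (unfold n; apply lt_0_INR; lia).
    assert (ha : a * (n+1) = n) by (unfold a; field; lra).
    assert (ha1 : a < 1).
    { apply (Rmult_lt_reg_r (n+1)); [lra|]. rewrite ha. lra. }
    exists (Rmax x0 a). split.
    + split. apply Rmax_l. unfold Rmax; destruct (Rle_dec x0 a); lra.
    + intros x hx. pose proof (phi_max j x0 x h0 hx) as H. cbv zeta in H. fold n a in H.
      set (x1 := Rmax x0 a) in *.
      assert (hx1 : 0 < x1) by (unfold x1; pose proof (Rmax_l x0 a); lra).
      replace (S (S (S j))) with (S j + 2)%nat by lia.
      rewrite !pow_add.
      assert (hp : 0 <= x*x*x1*x1) by (repeat apply Rmult_le_pos; lra).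
      replace (x1 * x1 * (x ^ S j * x ^ 2) * (1 - x)) with ((x*x*x1*x1)*(x^(S j)*(1-x))) by ring.
      replace (x * x * (x1 ^ S j * x1 ^ 2) * (1 - x1)) with ((x*x*x1*x1)*(x1^(S j)*(1-x1))) by ring.
      apply Rmult_le_compat_l; assumption.
Qed.

Lemma sqrt_facts (u:R) : 0 <= u -> sqrt u * sqrt u = u /\ 0 <= sqrt u.
Proof. intros; split; [apply sqrt_sqrt; lra| apply sqrt_pos]. Qed.

Lemma m_level (k:nat) (x0:R) : (1 <= k)%nat -> 0 < x0 < 1 ->
  exists m1, sqrt x0 <= m1 < 1 /\ forall m, sqrt x0 <= m < 1 ->
    m1*m1 * m^k * sqrt (1-m*m) <= m*m * m1^k * sqrt (1-m1*m1).
Proof.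
  intros hk h0. destruct (x_level k x0 hk h0) as [x1 [hx1 Hx]].
  exists (sqrt x1).
  destruct (sqrt_facts x1 ltac:(lra)) as [s1 s1p].
  destruct (sqrt_facts x0 ltac:(lra)) as [s0 s0p].
  split.
  - split. apply sqrt_le_1; lra.
    rewrite <- sqrt_1. apply sqrt_lt_1; lra.
  - intros m hm. rewrite s1.
    assert (hmm : x0 <= m*m) by nra.
    assert (hm1 : m*m < 1) by nra.
    destruct (sqrt_facts (1-m*m) ltac:(lra)) as [t tp].
    destruct (sqrt_facts (1-x1) ltac:(lra)) as [t1 t1p].
    specialize (Hx (m*m) ltac:(lra)).
    rewrite Rpow_mult_distr in Hx.
    assert (hmk : 0 <= m^k) by (apply pow_le; lra).
    assert (hsk : 0 <= sqrt x1 ^k) by (apply pow_le; lra).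
    set (A := x1 * m^k * sqrt (1 - m*m)).
    set (B := m*m * sqrt x1 ^ k * sqrt (1-x1)).
    assert (hA : 0 <= A) by (unfold A; repeat apply Rmult_le_pos; lra).
    assert (hB : 0 <= B) by (unfold B; repeat apply Rmult_le_pos; nra).
    assert (AA : A*A = x1*x1 * (m^k*m^k) * (1-m*m)).
    { unfold A. replace (x1 * m ^ k * sqrt (1 - m * m) * (x1 * m ^ k * sqrt (1 - m * m)))
        with (x1*x1*(m^k*m^k)*(sqrt (1 - m * m)*sqrt (1 - m * m))) by ring. rewrite t. ring. }
    assert (BB : B*B = m*m*(m*m) * (sqrt x1^k * sqrt x1^k) * (1-x1)).
    { unfold B. replace (m * m * sqrt x1 ^ k * sqrt (1 - x1) * (m * m * sqrt x1 ^ k * sqrt (1 - x1)))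
        with (m*m*(m*m)*(sqrt x1^k*sqrt x1^k)*(sqrt (1 - x1)*sqrt (1 - x1))) by ring. rewrite t1. ring. }
    rewrite <- Rpow_mult_distr, s1 in BB.
    destruct (Rle_or_lt A B) as [|hlt]; [assumption|].
    exfalso. nra.
Qed.

Lemma pow_strict (a b:R) (k:nat) : (1<=k)%nat -> 0 <= a < b -> a^k < b^k.
Proof.
  intros hk hab. destruct k as [|j]; [lia|].
  simpl. assert (h1 : a^j <= b^j) by (apply pow_incr; lra).
  assert (h2 : 0 < b^j) by (apply pow_lt; lra).
  assert (a * a^j <= a * b^j) by (apply Rmult_le_compat_l; lra).
  assert (a * b^j < b * b^j) by (apply Rmult_lt_compat_r; lra).
  lra.
Qed.

Lemma cont_f (sp lam : R) (k:nat) (a:R) : 0 <= 1 - a*a ->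
  continuity_pt (fun z => sp*(z*z) - lam*z^k*sqrt(1-z*z)) a.
Proof.
  intros ha.
  assert (c1 : continuity_pt (fun z => sp*(z*z)) a).
  { apply derivable_continuous_pt. reg. }
  assert (c2 : continuity_pt (fun z => lam*z^k) a).
  { apply derivable_continuous_pt. reg. }
  assert (c3 : continuity_pt (fun z => 1 - z*z) a).
  { apply derivable_continuous_pt. reg. }
  assert (c4 : continuity_pt (comp sqrt (fun z => 1 - z*z)) a).
  { apply continuity_pt_comp. exact c3. apply continuity_pt_sqrt. exact ha. }
  exact (continuity_pt_minus _ _ a c1 (continuity_pt_mult _ _ a c2 c4)).
Qed.

Lemma eq_form (P lam k_m m2 t : R) : 0 < P -> 0 < t ->
  (lam * k_m / sqrt P = m2 / t <-> lam * k_m * t = sqrt P * m2).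
Proof.
  intros hP ht. pose proof (sqrt_lt_R0 P hP) as hs. split; intro H.
  - replace (lam*k_m) with (lam*k_m/sqrt P * sqrt P) by (field; lra).
    rewrite H. field. lra.
  - assert (E : lam * k_m / sqrt P - m2 / t = (lam*k_m*t - sqrt P * m2)/(sqrt P * t))
      by (field; lra).
    rewrite H in E. replace (sqrt P * m2 - sqrt P * m2) with 0 in E by ring.
    unfold Rdiv in E at 3. rewrite Rmult_0_l in E. lra.
Qed.

Theorem lemmaB2 (p k : nat) (hp : (3 <= p)%nat) (hk : (1 <= k)%nat) :
  exists lam2 : R, 0 < lam2 /\
    forall lam m : R, 0 < lam -> is_mstar p k lam m ->
      (lam < lam2 -> m < m_lam p k lam) /\
      (lam2 <= lam -> m_lam p k lam <= m).
Proof.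
  set (P := INR p).
  assert (hP : 3 <= P) by (unfold P; replace 3 with (INR 3) by (simpl; ring); apply le_INR; lia).
  set (x0 := (P-2)/(P-1)).
  assert (hx0 : 0 < x0 < 1).
  { unfold x0. split. apply Rdiv_lt_0_compat; lra.
    apply (Rmult_lt_reg_r (P-1)); [lra|]. unfold Rdiv. rewrite Rmult_assoc, Rinv_l; lra. }
  assert (hx0e : x0 * (P-1) = P-2) by (unfold x0; field; lra).
  destruct (m_level k x0 hk hx0) as [m1 [[hm1a hm1b] Hmin]].
  pose proof (sqrt_lt_R0 x0 ltac:(lra)) as hsx0.
  assert (hm1 : 0 < m1) by lra.
  destruct (sqrt_facts x0 ltac:(lra)) as [sx0 _].
  set (sp := sqrt P). set (s1 := sqrt (P-1)).
  assert (hsp : 0 < sp) by (apply sqrt_lt_R0; lra).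
  assert (hs1 : 0 < s1) by (apply sqrt_lt_R0; lra).
  destruct (sqrt_facts P ltac:(lra)) as [spsp _]. fold sp in spsp.
  destruct (sqrt_facts (P-1) ltac:(lra)) as [s1s1 _]. fold s1 in s1s1.
  assert (hsp1 : 1 <= sp) by (unfold sp; rewrite <- sqrt_1; apply sqrt_le_1; lra).
  set (t1 := sqrt (1 - m1*m1)).
  assert (hm11 : m1*m1 < 1) by nra.
  assert (ht1 : 0 < t1) by (apply sqrt_lt_R0; lra).
  destruct (sqrt_facts (1-m1*m1) ltac:(lra)) as [t1t1 _]. fold t1 in t1t1.
  assert (hm1k : 0 < m1^k) by (apply pow_lt; lra).
  assert (fmono1 : forall m, 0 < m < 1 -> (P-2) * sqrt (1-m*m) <= (m*m)*s1 -> sqrt x0 <= m).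
  { intros m hm H. destruct (sqrt_facts (1-m*m) ltac:(nra)) as [tt tp].
    set (t := sqrt (1-m*m)) in *.
    assert (hy : x0 <= m*m).
    { destruct (Rle_or_lt x0 (m*m)) as [|hlt]; [assumption|exfalso].
      assert (h1 : (m*m)*(P-1) < P-2) by nra.
      assert (h2 : ((P-2)*t)*((P-2)*t) <= ((m*m)*s1)*((m*m)*s1)).
      { apply Rmult_le_compat; nra. }
      replace (((P-2)*t)*((P-2)*t)) with ((P-2)*(P-2)*(t*t)) in h2 by ring.
      replace (((m*m)*s1)*((m*m)*s1)) with ((m*m)*(m*m)*(s1*s1)) in h2 by ring.
      rewrite tt, s1s1 in h2.
      assert (h3 : 0 < m*m) by nra.
      nra. }
    destruct (Rle_or_lt (sqrt x0) m) as [|hlt]; [assumption|exfalso].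
    assert (m*m < sqrt x0 * sqrt x0) by nra. lra. }
  assert (fmono2 : forall m, 0 < m < 1 -> sqrt x0 <= m -> (P-2) * sqrt (1-m*m) <= (m*m)*s1).
  { intros m hm H. destruct (sqrt_facts (1-m*m) ltac:(nra)) as [tt tp].
    set (t := sqrt (1-m*m)) in *.
    assert (hy : x0 <= m*m).
    { assert (sqrt x0 * sqrt x0 <= m*m) by (apply Rmult_le_compat; lra). lra. }
    assert (h1 : P-2 <= (m*m)*(P-1)) by nra.
    destruct (Rle_or_lt ((P-2)*t) ((m*m)*s1)) as [|hlt]; [assumption|exfalso].
    assert (h2 : ((m*m)*s1)*((m*m)*s1) < ((P-2)*t)*((P-2)*t)).
    { assert (0 <= m*m*s1) by nra. nra. }
    replace (((P-2)*t)*((P-2)*t)) with ((P-2)*(P-2)*(t*t)) in h2 by ring.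
    replace (((m*m)*s1)*((m*m)*s1)) with ((m*m)*(m*m)*(s1*s1)) in h2 by ring.
    rewrite tt, s1s1 in h2.
    assert (h3 : 0 < m*m) by nra.
    assert (h4 : 0 <= (m*m)*(m*m) * ((m*m)*(P-1) - (P-2))) by (apply Rmult_le_pos; nra).
    nra. }
  exists (sp*(m1*m1)/(m1^k*t1)). split.
  { apply Rdiv_lt_0_compat. nra. apply Rmult_lt_0_compat; lra. }
  intros lam m hlam [[hm Heq] Hmax].
  assert (hm2 : forall z, z^2 = z*z) by (intro; ring).
  set (B := (P-2)*sqrt P/(lam*sqrt(P-1))).
  assert (hB : 0 < B) by (unfold B; apply Rdiv_lt_0_compat; fold sp s1; nra).
  assert (hBe : B * (lam*s1) = (P-2)*sp) by (unfold B; fold sp s1; field; lra).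
  set (Rk := Rpower B (1/INR k)).
  assert (hRk : 0 < Rk) by (unfold Rk, Rpower; apply exp_pos).
  assert (hRkk : Rk^k = B).
  { unfold Rk. rewrite <- Rpower_pow by (apply exp_pos). rewrite Rpower_mult.
    replace (1 / INR k * INR k) with 1. apply Rpower_1; lra.
    field. apply not_0_INR. lia. }
  assert (hml : m_lam p k lam = Rmin 1 Rk) by reflexivity.
  assert (ge_R : forall z, 0 < z < 1 -> Rk <= z -> (P-2)*sp <= lam * z^k * s1).
  { intros z hz H. assert (Rk^k <= z^k) by (apply pow_incr; lra).
    rewrite <- hBe. rewrite hRkk in H0.
    replace (lam*z^k*s1) with ((lam*s1)*z^k) by ring. rewrite Rmult_comm.
    apply Rmult_le_compat_l; nra. }
  assert (R_ge : forall z, 0 < z < 1 -> (P-2)*sp <= lam * z^k * s1 -> Rk <= z).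
  { intros z hz H. destruct (Rle_or_lt Rk z) as [|hlt]; [assumption|exfalso].
    pose proof (pow_strict z Rk k hk ltac:(lra)) as H1. rewrite hRkk in H1.
    rewrite <- hBe in H.
    assert ((lam*s1)*z^k < (lam*s1)*B) by (apply Rmult_lt_compat_l; nra).
    lra. }
  split.
  - intro hlt. rewrite hml.
    destruct (Rle_or_lt (Rmin 1 Rk) m) as [hge|]; [exfalso|assumption].
    assert (hmR : Rk <= m).
    { unfold Rmin in hge. destruct (Rle_dec 1 Rk); lra. }
    rewrite !hm2 in Heq.
    destruct (sqrt_facts (1-m*m) ltac:(nra)) as [tt tp].
    assert (ht : 0 < sqrt (1-m*m)) by (apply sqrt_lt_R0; nra).
    apply (eq_form P lam (m^k) (m*m) (sqrt (1-m*m)) ltac:(lra) ht) in Heq. fold sp in Heq.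
    set (t := sqrt (1-m*m)) in *.
    pose proof (ge_R m hm hmR) as G.
    assert (G2 : (P-2)*sp*t <= sp*(m*m)*s1).
    { rewrite <- Heq. replace (lam*m^k*t*s1) with ((lam*m^k*s1)*t) by ring.
      apply Rmult_le_compat_r; lra. }
    assert (G3 : (P-2)*t <= m*m*s1).
    { apply (Rmult_le_reg_l sp); [lra|]. lra. }
    pose proof (fmono1 m hm G3) as hm0.
    pose proof (Hmin m (conj hm0 (proj2 hm))) as HM. fold t1 t in HM.
    assert (hl2 : lam * (m1^k*t1) < sp*(m1*m1)).
    { apply (Rmult_lt_compat_r (m1^k*t1)) in hlt; [|apply Rmult_lt_0_compat; lra].
      replace (sp * (m1 * m1) / (m1 ^ k * t1) * (m1 ^ k * t1)) with (sp*(m1*m1)) in hlt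
        by (field; lra). exact hlt. }
    assert (hmm : 0 < m*m) by nra.
    assert (X1 : lam * (m1*m1*m^k*t) <= lam * (m*m*m1^k*t1)) by (apply Rmult_le_compat_l; lra).
    replace (lam * (m1*m1*m^k*t)) with (m1*m1*(lam*m^k*t)) in X1 by ring.
    rewrite Heq in X1.
    assert (X2 : (m*m) * (lam*(m1^k*t1)) < (m*m)*(sp*(m1*m1))) by (apply Rmult_lt_compat_l; lra).
    lra.
  - intro hge.
    assert (hl2 : sp*(m1*m1) <= lam * (m1^k*t1)).
    { apply (Rmult_le_compat_r (m1^k*t1)) in hge; [|left; apply Rmult_lt_0_compat; lra].
      replace (sp * (m1 * m1) / (m1 ^ k * t1) * (m1 ^ k * t1)) with (sp*(m1*m1)) in hge
        by (field; lra). exact hge. }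
    set (f := fun z => sp*(z*z) - lam*z^k*sqrt(1-z*z)).
    assert (Hroot : exists z, m1 <= z < 1 /\ f z = 0).
    { destruct (Rle_lt_or_eq_dec _ _ hl2) as [hlt|heq].
      2:{ exists m1. split. lra. unfold f. fold t1. rewrite heq. ring. }
      set (s := Rmin (1/2) (Rmin ((1-m1*m1)/2) (1/(8*lam*lam+1)))).
      assert (hsa : s <= 1/2) by apply Rmin_l.
      assert (hs2 : s <= (1-m1*m1)/2) by (eapply Rle_trans; [apply Rmin_r|apply Rmin_l]).
      assert (hs3 : s <= 1/(8*lam*lam+1)) by (eapply Rle_trans; [apply Rmin_r|apply Rmin_r]).
      assert (hl8 : 0 < 8*lam*lam+1) by nra.
      assert (hs0 : 0 < s).
      { unfold s. unfold Rmin. destruct (Rle_dec _ _); destruct (Rle_dec _ _); try lra;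
        apply Rdiv_lt_0_compat; lra. }
      assert (hs3' : s*(8*lam*lam+1) <= 1).
      { apply (Rmult_le_compat_r (8*lam*lam+1)) in hs3; [|lra].
        replace (1 / (8 * lam * lam + 1) * (8 * lam * lam + 1)) with 1 in hs3 by (field; lra).
        exact hs3. }
      set (y := sqrt (1-s)).
      destruct (sqrt_facts (1-s) ltac:(lra)) as [yy yp]. fold y in yy, yp.
      assert (hy1 : y < 1) by nra.
      assert (hym : m1 < y) by nra.
      assert (fy : 0 < f y).
      { unfold f. replace (1 - y*y) with s by lra.
        destruct (sqrt_facts s ltac:(lra)) as [rr rp].
        set (r := sqrt s) in *.
        assert (hyk : y^k <= 1) by (rewrite <- (pow1 k); apply pow_incr; lra).
        assert (hyk0 : 0 <= y^k) by (apply pow_le; lra).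
        assert (hlr : lam * r < 1/2).
        { assert (lam*lam*s < 1/4) by nra. nra. }
        assert (lam*y^k*r <= lam*r) by (assert (0 <= lam*r) by nra; nra).
        nra. }
      assert (fm1 : f m1 < 0) by (unfold f; fold t1; lra).
      destruct (IVT_interv f m1 y) as [z [hz1 hz2]].
      { intros a ha. apply cont_f. nra. }
      lra. assumption. assumption.
      exists z. split; [lra| exact hz2]. }
    destruct Hroot as [z [hz fz]].
    assert (hz0 : 0 < z < 1) by lra.
    assert (htz : 0 < sqrt (1-z*z)).
    { apply sqrt_lt_R0. pose proof (Rmult_lt_compat_l z z 1 (proj1 hz0) (proj2 hz0)). lra. }
    assert (Ez : lam * z^k * sqrt (1-z*z) = sp * (z*z)) by (unfold f in fz; lra).
    assert (Hz : mstar_eq p k lam z).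
    { split. exact hz0. rewrite !hm2. apply eq_form. fold P. lra. exact htz. exact Ez. }
    pose proof (Hmax z Hz) as hzm.
    assert (hz00 : sqrt x0 <= z) by lra.
    pose proof (fmono2 z hz0 hz00) as F.
    assert (G : (P-2)*sp <= lam*z^k*s1).
    { apply (Rmult_le_reg_r (sqrt (1-z*z))); [lra|].
      replace (lam*z^k*s1*sqrt(1-z*z)) with (s1 * (lam * z^k * sqrt (1-z*z))) by ring.
      rewrite Ez.
      replace ((P-2)*sp*sqrt(1-z*z)) with (sp*((P-2)*sqrt(1-z*z))) by ring.
      replace (s1*(sp*(z*z))) with (sp*((z*z)*s1)) by ring.
      apply Rmult_le_compat_l; lra. }
    pose proof (R_ge z hz0 G).
    rewrite hml. pose proof (Rmin_r 1 Rk). lra.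
Qed.
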